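(* For every binary relation $S$ on $\Sigma^*$ there is an ECRPQ($S$) query $\phi(x,x')$ and a deterministic logarithmic-space algorithm that, given $R\in\mathsf{REG}_2$ over $\Sigma$, constructs a labeled graph $G$ and two nodes $v,v'$ such that $G\models\phi(v,v')$ if and only if $R\cap S\neq\emptyset$.
   Context: $\Sigma$ is a finite alphabet, $\Sigma_\bot=\Sigma\cup\{\bot\}$ with $\bot\notin\Sigma$. For $(w_1,\dots,w_n)\in(\Sigma^* )^n$, $w_1\otimes\cdots\otimes w_n$ is the word over $\Sigma_\bot^n$ of length $\max_i|w_i|$ whose $k$-th letter is the tuple of $k$-th letters of the $w_i$, with $\bot$ used when $|w_i|<k$. $\mathsf{REG}_n$ is the class of $R\subseteq(\Sigma^* )^n$ such that some NFA over $\Sigma_\bot^n$ accepts exactly $\{w_1\otimes\cdots\otimes w_n:(w_1,\dots,w_n)\in R\}$; they are given by such NFAs. The graph may be labeled over an alphabet extending $\Sigma$ (e.g. containing $\Sigma_\bot\times\Sigma_\bot$ and fresh symbols), and $S$ is regarded as a relation on words over this alphabet. Labeled graphs, paths, labels, and ECRPQ($S$) queries $\exists\bar y(\bigwedge_i(u_i\xrightarrow{\chi_i:L_i}u_i')\wedge\bigwedge_j R_j(\bar\chi_j)\wedge\bigwedge_{(i,j)\in I}S(\chi_i,\chi_j))$ (with $L_i$ regular languages and $R_j$ regular relations) are as usual: satisfaction requires nodes for $\bar y$ and paths $\rho_i$ from $u_i$ to $u_i'$ with label in $L_i$, such that label tuples satisfy every $R_j$ atom and every $S$ atom. *)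

(* Defs.v *)
From HB Require Import structures.
From mathcomp Require Import all_boot.
Set Implicit Arguments. Unset Strict Implicit. Unset Printing Implicit Defensive.

Record nfa (A : finType) := Nfa {
  ntrans : seq (nat * A * nat);
  ninit  : seq nat;
  nfin   : seq nat }.

Definition nfa0 (A : finType) : nfa A := Nfa [::] [::] [::].

Fixpoint nfa_reach (A : finType) (M : nfa A) (p : nat) (w : seq A) (q : nat) : Prop :=
  match w with
  | [::] => p = q
  | a :: w' => exists r, ((p, a, r) \in ntrans M) /\ nfa_reach M r w' q
  end.

Definition nfa_accepts (A : finType) (M : nfa A) (w : seq A) : Prop :=
  exists p q, p \in ninit M /\ q \in nfin M /\ nfa_reach M p w q.

(* Convolution w_1 (x) ... (x) w_n, letters of Sigma_bot^n being        *)
(* functions 'I_n -> option A  (None plays the role of bot).            *)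
Definition conv (A : finType) (n : nat) (ws : 'I_n -> seq A)
  : seq {ffun 'I_n -> option A} :=
  [seq [ffun i => onth (ws i) k] | k <- iota 0 (\max_(i < n) size (ws i))].

Definition conv2 (A : finType) (w1 w2 : seq A) : seq {ffun 'I_2 -> option A} :=
  conv (fun i : 'I_2 => if val i == 0 then w1 else w2).

(* An NFA over Sigma_bot^2 presents a relation in REG_2 iff every word it *)
(* accepts is a convolution; the relation is then the following one.    *)
Definition reg2_nfa (A : finType) (M : nfa {ffun 'I_2 -> option A}) : Prop :=
  forall u, nfa_accepts M u -> exists w1 w2, u = conv2 w1 w2.

Definition rel_of2 (A : finType) (M : nfa {ffun 'I_2 -> option A}) (w1 w2 : seq A) : Prop :=
  nfa_accepts M (conv2 w1 w2).

Record graph (G : finType) := Graph {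
  gn : nat;
  gedges : seq (nat * G * nat) }.

Definition graph_wf (G : finType) (g : graph G) : Prop :=
  forall e, e \in gedges g -> (e.1.1 < gn g) /\ (e.2 < gn g).

Fixpoint is_path (G : finType) (g : graph G) (u : nat) (p : seq (nat * G * nat)) (u' : nat) : Prop :=
  match p with
  | [::] => u = u'
  | e :: p' => e \in gedges g /\ e.1.1 = u /\ is_path g e.2 p' u'
  end.

Definition plabel (G : finType) (p : seq (nat * G * nat)) : seq G := [seq e.1.2 | e <- p].

(* Node variables are natural numbers; variable 0 is x, variable 1 is x', *)
(* all other node variables are existentially quantified (the y's).     *)
(* Path variables chi_i are indexed by the position i of the reachability *)
(* atom (u_i -chi_i:L_i-> u_i') in q_paths.                              *)
Record ecrpq (G : finType) := Ecrpq {
  q_paths : seq (nat * nfa G * nat);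
  q_rels  : seq {n : nat & (nfa {ffun 'I_n -> option G} * ('I_n -> nat))%type};
  q_S     : seq (nat * nat) }.

Definition rel_atom0 (G : finType) : {n : nat & (nfa {ffun 'I_n -> option G} * ('I_n -> nat))%type} :=
  existT _ 0 (nfa0 _, fun _ => 0).

Definition ecrpq_wf (G : finType) (phi : ecrpq G) : Prop :=
  (forall k, k < size (q_rels phi) ->
     forall i, (projT2 (nth (rel_atom0 G) (q_rels phi) k)).2 i < size (q_paths phi)) /\
  (forall ij, ij \in q_S phi -> ij.1 < size (q_paths phi) /\ ij.2 < size (q_paths phi)).

Definition lift_rel (Sigma G : finType) (iota : Sigma -> G)
  (S : seq Sigma -> seq Sigma -> Prop) (u1 u2 : seq G) : Prop :=
  exists w1 w2, u1 = map iota w1 /\ u2 = map iota w2 /\ S w1 w2.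

Definition ecrpq_sat (G : finType) (SG : seq G -> seq G -> Prop)
  (g : graph G) (phi : ecrpq G) (v v' : nat) : Prop :=
  exists nu : nat -> nat,
    nu 0 = v /\ nu 1 = v' /\ (forall y, nu y < gn g) /\
    exists rho : nat -> seq (nat * G * nat),
      (forall i, i < size (q_paths phi) ->
         let: (u, L, u') := nth (0, nfa0 G, 0) (q_paths phi) i in
         is_path g (nu u) (rho i) (nu u') /\ nfa_accepts L (plabel (rho i))) /\
      (forall k, k < size (q_rels phi) ->
         let: existT n (R, chis) := nth (rel_atom0 G) (q_rels phi) k in
         nfa_accepts R (conv (fun j : 'I_n => plabel (rho (chis j))))) /\
      (forall ij, ij \in q_S phi -> SG (plabel (rho ij.1)) (plabel (rho ij.2))).

(* Deterministic logarithmic-space transducers: a deterministic Turing   *)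
(* machine with a read-only two-way input tape (with end markers), one   *)
(* read/write work tape (one-way infinite, blank-initialised) and a     *)
(* write-only one-way output tape.                                       *)
Inductive esym := eOne | eHash | eSemi.
Inductive cell := LM | RM | Ch of esym.
Inductive move := mL | mS | mR.

Record TM := Tm {
  tQ : finType;
  tW : finType;
  tblank : tW;
  tq0 : tQ;
  (* None = halt *)
  tdelta : tQ -> cell -> tW -> option (tQ * tW * move * move * option esym) }.

Record config (M : TM) := Config {
  cq : tQ M; cin : nat; cwork : seq (tW M); cwh : nat; cout : seq esym }.

Definition init_config (M : TM) : config M := Config (tq0 M) 0 [::] 0 [::].

Definition read_in (x : seq esym) (i : nat) : cell :=
  if i == 0 then LM else if i <= size x then Ch (nth eOne x i.-1) else RM.

Definition move_in (x : seq esym) (i : nat) (m : move) : nat :=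
  match m with mL => i.-1 | mS => i | mR => minn i.+1 (size x).+1 end.

Definition move_work (i : nat) (m : move) : nat :=
  match m with mL => i.-1 | mS => i | mR => i.+1 end.

Definition step (M : TM) (x : seq esym) (c : config M) : option (config M) :=
  match tdelta (cq c) (read_in x (cin c)) (nth (tblank M) (cwork c) (cwh c)) with
  | None => None
  | Some (q', w, mi, mw, o) =>
      Some (Config q' (move_in x (cin c) mi)
                   (set_nth (tblank M) (cwork c) (cwh c) w)
                   (move_work (cwh c) mw)
                   (cout c ++ (if o is Some s then [:: s] else [::])))
  end.

Fixpoint steps (M : TM) (x : seq esym) (n : nat) (c : config M) : config M :=
  match n with
  | 0 => c
  | n'.+1 => match step x c with Some c' => steps x n' c' | None => c end
  end.

(* On input x, M halts with output y, never moving its work head beyond  *)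
(* cell s (i.e. using at most s+1 work cells).                           *)
Definition computes_in_space (M : TM) (x y : seq esym) (s : nat) : Prop :=
  exists n,
    step x (steps x n (init_config M)) = None /\
    cout (steps x n (init_config M)) = y /\
    forall k, k <= n -> cwh (steps x k (init_config M)) <= s.

(* Encodings (unary numbers, self-delimiting, injective).               *)
Definition enat (n : nat) : seq esym := nseq n eOne ++ [:: eHash].
Definition elist (T : Type) (f : T -> seq esym) (l : seq T) : seq esym :=
  flatten (map f l) ++ [:: eSemi].
Definition esymb (A : finType) (a : A) : seq esym := enat (enum_rank a).
Definition etrans (A : finType) (t : nat * A * nat) : seq esym :=
  enat t.1.1 ++ esymb t.1.2 ++ enat t.2.

Definition enc_nfa (A : finType) (M : nfa A) : seq esym :=
  elist (@etrans A) (ntrans M) ++ elist enat (ninit M) ++ elist enat (nfin M).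

Definition enc_graph_nodes (G : finType) (g : graph G) (v v' : nat) : seq esym :=
  enat (gn g) ++ elist (@etrans G) (gedges g) ++ enat v ++ enat v'.

(* Main.v *)
Require Import Defs.
From HB Require Import structures.
From mathcomp Require Import all_boot.
From mathcomp Require Import zify.
Require Import Defs.
Set Implicit Arguments. Unset Strict Implicit. Unset Printing Implicit Defensive.

Lemma rank_val (T : finType) (x : T) : val (enum_rank x) = index x (enum T).
Proof.
rewrite /enum_rank enum_rank_in.unlock insubdK //.
by rewrite unfold_in /= cardE index_mem mem_enum.
Qed.

Lemma rank_inl (T1 T2 : finType) (x : T1) :
  val (enum_rank (inl x : (T1 + T2)%type)) = val (enum_rank x).
Proof.
rewrite !rank_val.
rewrite [X in index _ X]enumT unlock /= /sum_enum -!enumT.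
rewrite index_cat map_f ?mem_enum //.
by rewrite index_map //; move=> a b [].
Qed.

Section Constr.
Variable Sigma : finType.

Definition F2 : finType := {ffun 'I_2 -> option Sigma}.
Definition Gam : finType := (F2 + (Sigma + bool))%type.
Definition iotaG (a : Sigma) : Gam := inr (inl a).
Definition startL : Gam := inr (inr true).
Definition endL : Gam := inr (inr false).

Definition tedges (A : nfa F2) : seq (nat * Gam * nat) :=
  [seq (t.1.1.+2, inl t.1.2 : Gam, t.2.+2) | t <- ntrans A].
Definition iedges (A : nfa F2) : seq (nat * Gam * nat) :=
  [seq (0, startL, p.+2) | p <- ninit A].
Definition fedges (A : nfa F2) : seq (nat * Gam * nat) :=
  [seq (q.+2, endL, 1) | q <- nfin A].
Definition ledges : seq (nat * Gam * nat) := [seq (0, iotaG a, 0) | a <- enum Sigma].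
Definition mkg (A : nfa F2) : graph Gam :=
  Graph (size (enc_nfa A)).+2 (tedges A ++ iedges A ++ fedges A ++ ledges).

Definition s0 : seq esym := enat 0 ++ esymb startL ++ [:: eOne; eOne].
Definition s1 : seq esym := esymb endL ++ enat 1.
Definition s2 : seq esym := flatten (map (@etrans Gam) ledges) ++ [:: eSemi] ++ enat 0 ++ enat 1.
Definition LL := size s0 + size s1 + size s2 + 1.
Definition KK := 20 + 3 * LL.

Definition emit (s : seq esym) (cont b j : nat) : option (nat * move * option esym) :=
  if j < size s then Some (b + j.+1, mS, Some (nth eOne s j)) else Some (cont, mS, None).

Definition copy (self next : nat) (c : cell) : option (nat * move * option esym) :=
  match c with
  | Ch eOne => Some (self, mR, Some eOne)
  | Ch eHash => Some (next, mR, Some eHash)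
  | _ => None
  end.

Definition dn (n : nat) (c : cell) : option (nat * move * option esym) :=
  if n < 20 then
  match n with
  | 0 => Some (1, mS, Some eOne)
  | 1 => Some (2, mR, Some eOne)
  | 2 => match c with Ch _ => Some (2, mR, Some eOne) | RM => Some (3, mL, Some eHash) | LM => None end
  | 3 => match c with LM => Some (4, mR, None) | _ => Some (3, mL, None) end
  | 4 => match c with Ch eSemi => Some (11, mR, None) | _ => Some (5, mS, Some eOne) end
  | 5 => Some (6, mS, Some eOne)
  | 6 => copy 6 7 c
  | 7 => copy 7 8 c
  | 8 => Some (9, mS, Some eOne)
  | 9 => Some (10, mS, Some eOne)
  | 10 => copy 10 4 c
  | 11 => match c with Ch eSemi => Some (13, mR, None) | _ => Some (20, mS, None) end
  | 12 => copy 12 11 c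
  | 13 => match c with Ch eSemi => Some (20 + 2 * LL, mR, None) | _ => Some (14, mS, Some eOne) end
  | 14 => Some (15, mS, Some eOne)
  | 15 => copy 15 (20 + LL) c
  | _ => None
  end
  else let m := n - 20 in
  if m < LL then emit s0 12 20 m
  else if m < 2 * LL then emit s1 13 (20 + LL) (m - LL)
  else if m < 3 * LL then emit s2 16 (20 + 2 * LL) (m - 2 * LL) else None.

Definition tdel (q : 'I_KK.+1) (c : cell) (_ : unit) : option ('I_KK.+1 * unit * move * move * option esym) :=
  match dn q c with
  | Some (n', mi, o) => Some (inord n', tt, mi, mS, o)
  | None => None
  end.

Definition TMx : TM := @Tm ('I_KK.+1) unit tt (inord 0) tdel.

End Constr.

Section Run.
Variable Sigma : finType.
Variable x : seq esym.
Local Notation M := (TMx Sigma).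
Local Notation K := (KK Sigma).
Local Notation dn := (dn Sigma).

Definition conf n i w o : config M := @Config M (inord n) i w 0 o.
Definition oseq (o : option esym) := if o is Some s then [:: s] else [::].

Definition reach n i n' i' d := forall w o, exists k w',
  steps x k (conf n i w o) = conf n' i' w' (o ++ d).

Lemma steps_none k (c : config M) : step x c = None -> steps x k c = c.
Proof. by case: k => //= k ->. Qed.

Lemma steps_add a b (c : config M) : steps x (a + b) c = steps x b (steps x a c).
Proof.
elim: a c => //= a IH c.
case E: (step x c) => [c'|]; first exact: IH.
by rewrite steps_none.
Qed.

Lemma reach_trans n i n1 i1 d1 n2 i2 d2 :
  reach n i n1 i1 d1 -> reach n1 i1 n2 i2 d2 -> reach n i n2 i2 (d1 ++ d2).
Proof.
move=> H1 H2 w o; have [k1 [w1 E1]] := H1 w o.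
have [k2 [w2 E2]] := H2 w1 (o ++ d1).
by exists (k1 + k2), w2; rewrite steps_add E1 E2 catA.
Qed.

Lemma reach_refl n i : reach n i n i [::].
Proof. by move=> w o; exists 0, w; rewrite cats0. Qed.

Lemma step_conf n i w o n' mi out : n < K.+1 -> n' < K.+1 ->
  dn n (read_in x i) = Some (n', mi, out) ->
  step x (conf n i w o) = Some (conf n' (move_in x i mi) (set_nth tt w 0 tt) (o ++ oseq out)).
Proof.
move=> hn hn' E.
rewrite /step /conf /= /tdel inordK // E /=.
by case: out {E}.
Qed.

Lemma reach1 n i n' mi out : n < K.+1 -> n' < K.+1 ->
  dn n (read_in x i) = Some (n', mi, out) -> reach n i n' (move_in x i mi) (oseq out).
Proof.
move=> hn hn' E w o; exists 1, (set_nth tt w 0 tt).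
by rewrite /= (step_conf _ _ hn hn' E).
Qed.

Lemma step_halt n i w o : n < K.+1 -> dn n (read_in x i) = None -> step x (conf n i w o) = None.
Proof. by move=> hn E; rewrite /step /conf /= /tdel inordK // E. Qed.

Lemma cwh_steps k (c : config M) : cwh c = 0 -> cwh (steps x k c) = 0.
Proof.
elim: k c => //= k IH c h.
case E: (step x c) => [c'|] //; apply: IH.
move: E; rewrite /step /= /tdel.
case: (dn _ _) => [[[n' mi] o]|] //= [<-] /=; by rewrite h.
Qed.

Lemma read_at pre a rest : x = pre ++ a :: rest -> read_in x (size pre).+1 = Ch a.
Proof.
move=> ->; rewrite /read_in /= size_cat /=.
have -> : size pre < size pre + (size rest).+1 by lia.
by rewrite nth_cat ltnn subnn.
Qed.

Lemma move_at pre a rest : x = pre ++ a :: rest ->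
  move_in x (size pre).+1 mR = (size (pre ++ [:: a])).+1.
Proof. move=> ->; rewrite /= !size_cat /=; lia. Qed.

End Run.

Section Run2.
Variable Sigma : finType.
Variable x : seq esym.
Local Notation K := (KK Sigma).
Local Notation L := (LL Sigma).
Local Notation dn := (dn Sigma).
Local Notation reach := (@reach Sigma x).

Lemma lit n : n < 20 -> n < K.+1.
Proof. rewrite /KK; lia. Qed.

Lemma reachR n n' a pre rest out : n < K.+1 -> n' < K.+1 ->
  x = pre ++ a :: rest -> dn n (Ch a) = Some (n', mR, out) ->
  reach n (size pre).+1 n' (size (pre ++ [:: a])).+1 (oseq out).
Proof.
move=> h1 h2 E D; rewrite -(move_at E); apply: reach1 => //.
by rewrite (read_at E).
Qed.

Lemma reachS n n' i out : n < K.+1 -> n' < K.+1 ->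
  dn n (read_in x i) = Some (n', mS, out) -> reach n i n' i (oseq out).
Proof. by move=> h1 h2 D; have := reach1 h1 h2 D. Qed.

Lemma copy_run s s' : s < K.+1 -> s' < K.+1 ->
  dn s (Ch eOne) = Some (s, mR, Some eOne) -> dn s (Ch eHash) = Some (s', mR, Some eHash) ->
  forall k pre rest, x = pre ++ enat k ++ rest ->
  reach s (size pre).+1 s' (size (pre ++ enat k)).+1 (enat k).
Proof.
move=> h1 h2 D1 D2; elim=> [|k IH] pre rest E.
  exact: (reachR h1 h2 E D2).
have E' : x = (pre ++ [:: eOne]) ++ enat k ++ rest by rewrite E -catA.
have := reachR h1 h1 E D1 => R1.
have := IH _ _ E' => R2.
have := reach_trans R1 R2.
by rewrite -catA.
Qed.

Lemma emit_run s b cont i : b + size s < K.+1 -> cont < K.+1 ->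
  (forall j c, j < size s -> dn (b + j) c = Some (b + j.+1, mS, Some (nth eOne s j))) ->
  (forall c, dn (b + size s) c = Some (cont, mS, None)) ->
  forall j, j <= size s -> reach (b + j) i cont i (drop j s).
Proof.
move=> hb hc D1 D2.
suff : forall m j, size s - j = m -> j <= size s -> reach (b + j) i cont i (drop j s).
  by move=> H j; apply: H.
elim=> [|m IH] j Em hj.
  have -> : j = size s by lia.
  rewrite drop_size; apply: (reachS (out := None)); [lia|exact: hc|exact: D2].
have hj' : j < size s by lia.
rewrite (drop_nth eOne hj').
have R1 : reach (b + j) i (b + j.+1) i [:: nth eOne s j].
  apply: (reachS (out := Some (nth eOne s j))); [lia|lia|exact: D1].
have R2 := IH j.+1 ltac:(lia) hj'.
exact: (reach_trans R1 R2).
Qed.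

Lemma dn_e0 j c : j < L -> dn (20 + j) c = emit (s0 Sigma) 12 20 j.
Proof.
move=> h; rewrite /dn.
have -> : (20 + j < 20) = false by lia.
by rewrite addKn h.
Qed.

Lemma dn_e1 j c : j < L -> dn (20 + L + j) c = emit (s1 Sigma) 13 (20 + L) j.
Proof.
move=> h; rewrite /dn.
have -> : (20 + L + j < 20) = false by lia.
have -> : 20 + L + j - 20 = L + j by lia.
have -> : (L + j < L) = false by lia.
have -> : (L + j < 2 * L) = true by lia.
by have -> : L + j - L = j by lia.
Qed.

Lemma dn_e2 j c : j < L -> dn (20 + 2 * L + j) c = emit (s2 Sigma) 16 (20 + 2 * L) j.
Proof.
move=> h; rewrite /dn.
have -> : (20 + 2 * L + j < 20) = false by lia.
have -> : 20 + 2 * L + j - 20 = 2 * L + j by lia.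
have -> : (2 * L + j < L) = false by lia.
have -> : (2 * L + j < 2 * L) = false by lia.
have -> : (2 * L + j < 3 * L) = true by lia.
by have -> : 2 * L + j - 2 * L = j by lia.
Qed.

Lemma emit0 i : reach 20 i 12 i (s0 Sigma).
Proof.
have H := @emit_run (s0 Sigma) 20 12 i.
have := H ltac:(rewrite /KK /LL; lia) ltac:(rewrite /KK /LL; lia).
move=> H0; have := H0 _ _ 0 (leq0n _); rewrite addn0 drop0; apply => //.
- move=> j c hj; rewrite dn_e0 /emit ?hj //; rewrite /LL; lia.
- move=> c; rewrite dn_e0 /emit ?ltnn //; rewrite /LL; lia.
Qed.

Lemma emit1 i : reach (20 + L) i 13 i (s1 Sigma).
Proof.
have H := @emit_run (s1 Sigma) (20 + L) 13 i.
have := H ltac:(rewrite /KK /LL; lia) ltac:(rewrite /KK /LL; lia).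
move=> H0; have := H0 _ _ 0 (leq0n _); rewrite addn0 drop0; apply => //.
- move=> j c hj; rewrite dn_e1 /emit ?hj //; rewrite /LL; lia.
- move=> c; rewrite dn_e1 /emit ?ltnn //; rewrite /LL; lia.
Qed.

Lemma emit2 i : reach (20 + 2 * L) i 16 i (s2 Sigma).
Proof.
have H := @emit_run (s2 Sigma) (20 + 2 * L) 16 i.
have := H ltac:(rewrite /KK /LL; lia) ltac:(rewrite /KK /LL; lia).
move=> H0; have := H0 _ _ 0 (leq0n _); rewrite addn0 drop0; apply => //.
- move=> j c hj; rewrite dn_e2 /emit ?hj //; rewrite /LL; lia.
- move=> c; rewrite dn_e2 /emit ?ltnn //; rewrite /LL; lia.
Qed.

End Run2.

Lemma esymb_inl (Sigma : finType) (a : F2 Sigma) : esymb (inl a : Gam Sigma) = esymb a.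
Proof. by rewrite /esymb; congr enat; exact: rank_inl. Qed.

Section Run3.
Variable Sigma : finType.
Variable x : seq esym.
Local Notation K := (KK Sigma).
Local Notation L := (LL Sigma).
Local Notation dn := (dn Sigma).
Local Notation reach := (@reach Sigma x).

Lemma reach_eq n i n' i' d j' e : reach n i n' i' d -> i' = j' -> d = e -> reach n i n' j' e.
Proof. by move=> H <- <-. Qed.

Lemma count_run i : i <= size x -> reach 2 i.+1 3 (size x) (nseq (size x - i) eOne ++ [:: eHash]).
Proof.
move=> hi.
suff : forall m i, size x - i = m -> i <= size x ->
  reach 2 i.+1 3 (size x) (nseq (size x - i) eOne ++ [:: eHash]) by move=> H; exact: H.
elim=> [|m IH] {}i Em {}hi.
  have Ei : i = size x by lia.
  subst i; rewrite subnn /=.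
  have D : dn 2 (read_in x (size x).+1) = Some (3, mL, Some eHash) by rewrite /read_in /= ltnn.
  by apply: (reach_eq (@reach1 Sigma x 2 (size x).+1 3 mL (Some eHash) (@lit Sigma 2 isT) (@lit Sigma 3 isT) D)).

have hi' : i < size x by lia.
have D : dn 2 (read_in x i.+1) = Some (2, mR, Some eOne).
  by rewrite /read_in /= hi'.
have R1 := @reach1 Sigma x 2 i.+1 2 mR (Some eOne) (@lit Sigma 2 isT) (@lit Sigma 2 isT) D.
have R2 := IH i.+1 ltac:(lia) hi'.
have Em2 : move_in x i.+1 mR = i.+2 by rewrite /=; lia.
rewrite Em2 in R1.
have := reach_trans R1 R2.
have -> : size x - i = (size x - i.+1).+1 by lia.
by move=> H; exact: H.
Qed.

Lemma back_run i : reach 3 i 4 1 [::].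
Proof.
elim: i => [|i IH].
  apply: (reach_eq (@reach1 Sigma x 3 0 4 mR None (@lit Sigma 3 isT) (@lit Sigma 4 isT) erefl)) => //.
  by rewrite /=; lia.
have D : dn 3 (read_in x i.+1) = Some (3, mL, None).
  by rewrite /read_in /=; case: ifP.
exact: (reach_trans (@reach1 Sigma x 3 i.+1 3 mL None (@lit Sigma 3 isT) (@lit Sigma 3 isT) D) IH).
Qed.

Lemma start_run : reach 0 0 2 1 [:: eOne; eOne].
Proof.
have R1 := @reach1 Sigma x 0 0 1 mS (Some eOne) (@lit Sigma 0 isT) (@lit Sigma 1 isT) erefl.
have R2 := @reach1 Sigma x 1 0 2 mR (Some eOne) (@lit Sigma 1 isT) (@lit Sigma 2 isT) erefl.
apply: (reach_eq (reach_trans R1 R2)) => //.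
by rewrite /=; lia.
Qed.

Lemma read_enat pre k rest : x = pre ++ enat k ++ rest ->
  exists c, read_in x (size pre).+1 = Ch c /\ c <> eSemi.
Proof.
case: k => [|k] E.
  by exists eHash; rewrite (@read_at x _ _ _ E).
by exists eOne; rewrite (@read_at x _ _ _ E).
Qed.

Lemma lit20 : 20 < K.+1. Proof. rewrite /KK; lia. Qed.
Lemma litL : 20 + L < K.+1. Proof. rewrite /KK; lia. Qed.
Lemma lit2L : 20 + 2 * L < K.+1. Proof. rewrite /KK; lia. Qed.

Lemma etrans_e p (a : F2 Sigma) q :
  etrans (p.+2, inl a : Gam Sigma, q.+2) =
  [:: eOne; eOne] ++ enat p ++ esymb a ++ [:: eOne; eOne] ++ enat q.
Proof. have := esymb_inl a; rewrite /etrans /esymb /= => ->; by rewrite -!catA. Qed.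

Lemma T_run (ts : seq (nat * F2 Sigma * nat)) pre rest :
  x = pre ++ flatten (map (@etrans _) ts) ++ eSemi :: rest ->
  reach 4 (size pre).+1 11 (size (pre ++ flatten (map (@etrans _) ts) ++ [:: eSemi])).+1
    (flatten (map (@etrans (Gam Sigma)) [seq (t.1.1.+2, inl t.1.2 : Gam Sigma, t.2.+2) | t <- ts])).
Proof.
elim: ts pre => [|[[p a] q] ts IH] pre E /=.
  by apply: reach_eq; first exact: (@reachR Sigma x 4 11 eSemi pre rest None (@lit Sigma 4 isT) (@lit Sigma 11 isT) E erefl).
have E1 : x = pre ++ enat p ++ (esymb a ++ enat q ++ flatten (map (@etrans _) ts) ++ eSemi :: rest).
  by rewrite E /etrans /= -!catA.
have [c [Ec Nc]] := read_enat E1.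
have R1 : reach 4 (size pre).+1 5 (size pre).+1 [:: eOne].
  apply: (@reachS Sigma x 4 5 _ (Some eOne) (@lit Sigma 4 isT) (@lit Sigma 5 isT)); rewrite Ec; by case: c Nc Ec.
have R2 : reach 5 (size pre).+1 6 (size pre).+1 [:: eOne].
  exact: (@reachS Sigma x 5 6 _ (Some eOne) (@lit Sigma 5 isT) (@lit Sigma 6 isT)).
have R3 := @copy_run Sigma x 6 7 (@lit Sigma 6 isT) (@lit Sigma 7 isT) erefl erefl _ _ _ E1.
set pre2 := pre ++ enat p.
have E2 : x = pre2 ++ enat (enum_rank a) ++ (enat q ++ flatten (map (@etrans _) ts) ++ eSemi :: rest).
  by rewrite E1 /pre2 -!catA.
have R4 := @copy_run Sigma x 7 8 (@lit Sigma 7 isT) (@lit Sigma 8 isT) erefl erefl _ _ _ E2.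
set pre3 := pre2 ++ enat (enum_rank a).
have R5 : reach 8 (size pre3).+1 9 (size pre3).+1 [:: eOne].
  exact: (@reachS Sigma x 8 9 _ (Some eOne) (@lit Sigma 8 isT) (@lit Sigma 9 isT)).
have R6 : reach 9 (size pre3).+1 10 (size pre3).+1 [:: eOne].
  exact: (@reachS Sigma x 9 10 _ (Some eOne) (@lit Sigma 9 isT) (@lit Sigma 10 isT)).
have E3 : x = pre3 ++ enat q ++ (flatten (map (@etrans _) ts) ++ eSemi :: rest).
  by rewrite E2 /pre3 -!catA.
have R7 := @copy_run Sigma x 10 4 (@lit Sigma 10 isT) (@lit Sigma 4 isT) erefl erefl _ _ _ E3.
have E4 : x = (pre3 ++ enat q) ++ flatten (map (@etrans _) ts) ++ eSemi :: rest.
  by rewrite E3 -!catA.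
have R8 := IH _ E4.
apply: (reach_eq (reach_trans R1 (reach_trans R2 (reach_trans R3 (reach_trans R4
    (reach_trans R5 (reach_trans R6 (reach_trans R7 R8)))))))).
- rewrite /pre3 /pre2 /etrans /= -!catA; reflexivity.
- rewrite esymb_inl /esymb /enat /= -!catA /= -!catA; reflexivity.
Qed.

Lemma I_run (ps : seq nat) pre rest :
  x = pre ++ flatten (map enat ps) ++ eSemi :: rest ->
  reach 11 (size pre).+1 13 (size (pre ++ flatten (map enat ps) ++ [:: eSemi])).+1
    (flatten (map (@etrans (Gam Sigma)) [seq (0, startL Sigma, p.+2) | p <- ps])).
Proof.
elim: ps pre => [|p ps IH] pre E /=.
  by apply: reach_eq; first exact: (@reachR Sigma x 11 13 eSemi pre rest None (@lit Sigma 11 isT) (@lit Sigma 13 isT) E erefl).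
have E1 : x = pre ++ enat p ++ (flatten (map enat ps) ++ eSemi :: rest).
  by rewrite E -!catA.
have [c [Ec Nc]] := read_enat E1.
have R1 : reach 11 (size pre).+1 20 (size pre).+1 [::].
  apply: (@reachS Sigma x 11 20 _ None (@lit Sigma 11 isT) lit20); rewrite Ec; by case: c Nc Ec.
have R2 := @emit0 Sigma x (size pre).+1.
have R3 := @copy_run Sigma x 12 11 (@lit Sigma 12 isT) (@lit Sigma 11 isT) erefl erefl _ _ _ E1.
have E4 : x = (pre ++ enat p) ++ flatten (map enat ps) ++ eSemi :: rest.
  by rewrite E1 -!catA.
have R4 := IH _ E4.
apply: (reach_eq (reach_trans R1 (reach_trans R2 (reach_trans R3 R4)))).
- by rewrite -!catA.
- by rewrite /s0 /etrans /= -!catA.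
Qed.

Lemma F_run (qs : seq nat) pre rest :
  x = pre ++ flatten (map enat qs) ++ eSemi :: rest ->
  reach 13 (size pre).+1 16 (size (pre ++ flatten (map enat qs) ++ [:: eSemi])).+1
    (flatten (map (@etrans (Gam Sigma)) [seq (q.+2, endL Sigma, 1) | q <- qs]) ++ s2 Sigma).
Proof.
elim: qs pre => [|q qs IH] pre E /=.
  have R1 := @reachR Sigma x 13 (20 + 2 * L) eSemi pre rest None (@lit Sigma 13 isT) lit2L E erefl.
  have R2 := @emit2 Sigma x (size (pre ++ [:: eSemi])).+1.
  by apply: (reach_eq (reach_trans R1 R2)).
have E1 : x = pre ++ enat q ++ (flatten (map enat qs) ++ eSemi :: rest).
  by rewrite E -!catA.
have [c [Ec Nc]] := read_enat E1.
have R1 : reach 13 (size pre).+1 14 (size pre).+1 [:: eOne].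
  apply: (@reachS Sigma x 13 14 _ (Some eOne) (@lit Sigma 13 isT) (@lit Sigma 14 isT)); rewrite Ec; by case: c Nc Ec.
have R2 : reach 14 (size pre).+1 15 (size pre).+1 [:: eOne].
  exact: (@reachS Sigma x 14 15 _ (Some eOne) (@lit Sigma 14 isT) (@lit Sigma 15 isT)).
have R3 := @copy_run Sigma x 15 (20 + L) (@lit Sigma 15 isT) litL erefl erefl _ _ _ E1.
have R4 := @emit1 Sigma x (size (pre ++ enat q)).+1.
have E4 : x = (pre ++ enat q) ++ flatten (map enat qs) ++ eSemi :: rest.
  by rewrite E1 -!catA.
have R5 := IH _ E4.
apply: (reach_eq (reach_trans R1 (reach_trans R2 (reach_trans R3 (reach_trans R4 R5))))).
- by rewrite -!catA.
- by rewrite /s1 /etrans /= -!catA.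
Qed.

End Run3.

Section Full.
Variable Sigma : finType.
Variable A : nfa (F2 Sigma).
Local Notation x := (enc_nfa A).

Lemma full_run : exists k w,
  steps x k (init_config (TMx Sigma)) = @conf Sigma 16 (size x).+1 w (enc_graph_nodes (mkg A) 0 1).
Proof.
set T := flatten (map (@etrans _) (ntrans A)).
set I := flatten (map enat (ninit A)).
set F := flatten (map enat (nfin A)).
have ET : x = [::] ++ T ++ eSemi :: ((I ++ [:: eSemi]) ++ F ++ [:: eSemi]).
  by rewrite /enc_nfa /elist -!catA.
have EI : x = (T ++ [:: eSemi]) ++ I ++ eSemi :: (F ++ [:: eSemi]).
  by rewrite /enc_nfa /elist -!catA.
have EF : x = ((T ++ [:: eSemi]) ++ (I ++ [:: eSemi])) ++ F ++ eSemi :: [::].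
  by rewrite /enc_nfa /elist -!catA.
have R0 := @start_run Sigma x.
have R1 := @count_run Sigma x 0 (leq0n _).
have R2 := @back_run Sigma x (size x).
have R3 := @T_run Sigma x _ _ _ ET.
have R4 := @I_run Sigma x _ _ _ EI.
have R5 := @F_run Sigma x _ _ _ EF.
have H := reach_trans R0 (reach_trans R1 (reach_trans R2 (reach_trans R3 (reach_trans R4 R5)))).
have [k [w E]] := H [::] [::].
exists k, w.
have -> : init_config (TMx Sigma) = @conf Sigma 0 0 [::] [::] by [].
rewrite E.
have -> : size (((T ++ [:: eSemi]) ++ I ++ [:: eSemi]) ++ F ++ [:: eSemi]) = size x.
  by rewrite [in RHS]EF.
congr (conf _ _ _ _).
rewrite /enc_graph_nodes /mkg /elist /s2 !map_cat !flatten_cat subn0 /enat /= -!catA.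
reflexivity.
Qed.

Lemma full_space k : cwh (steps x k (init_config (TMx Sigma))) = 0.
Proof. exact: cwh_steps. Qed.

End Full.

Lemma onth_iota0 N k : onth (iota 0 N) k = if k < N then Some k else None.
Proof.
rewrite onthE; case: ltnP => h.
  by rewrite (nth_map 0) ?size_iota // nth_iota.
by rewrite nth_default // size_map size_iota.
Qed.

Lemma onth_conv (T : finType) n (ws : 'I_n -> seq T) k :
  onth (conv ws) k = if k < \max_(i < n) size (ws i) then Some [ffun i => onth (ws i) k] else None.
Proof. by rewrite /conv onth_map onth_iota0; case: ifP. Qed.

Lemma conv_ext (T : finType) n (ws ws' : 'I_n -> seq T) : ws =1 ws' -> conv ws = conv ws'.
Proof.
move=> E; rewrite /conv (eq_bigr (fun i => size (ws' i))) => [|i _]; last by rewrite E.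
by apply: eq_map => k; apply/ffunP => i; rewrite !ffunE E.
Qed.

Lemma conv_all_intro (T : finType) n (ws : 'I_n -> seq T) (P : pred {ffun 'I_n -> option T}) :
  (forall k, k < \max_(i < n) size (ws i) -> P [ffun i => onth (ws i) k]) -> all P (conv ws).
Proof.
by move=> H; rewrite /conv all_map; apply/allP => k; rewrite mem_iota add0n /= => /H.
Qed.

Lemma conv_all_elim (T : finType) n (ws : 'I_n -> seq T) (P : pred {ffun 'I_n -> option T}) :
  all P (conv ws) -> forall k, k < \max_(i < n) size (ws i) -> P [ffun i => onth (ws i) k].
Proof.
rewrite /conv all_map => /allP H k hk.
by have := H k; rewrite mem_iota add0n /=; apply.
Qed.

Lemma onth_some (T : Type) (s : seq T) k : k < size s -> exists a, onth s k = Some a.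
Proof. elim: s k => [|a s IH] [|k] //=; [by exists a | exact: IH]. Qed.

Lemma onth_size (T : Type) (s : seq T) k a : onth s k = Some a -> k < size s.
Proof. elim: s k => [|b s IH] k; first by case: k => [|k] [].
by case: k => [|k] //= /IH. Qed.

Definition W3 (T : Type) (b c1 c2 : seq T) (j : 'I_3) := nth [::] [:: b; c1; c2] j.

Lemma max3 (T : Type) (b c1 c2 : seq T) :
  \max_(j < 3) size (W3 b c1 c2 j) = maxn (size b) (maxn (size c1) (size c2)).
Proof. by rewrite big_ord_recl big_ord_recl big_ord1. Qed.

Lemma max2 (T : Type) (w1 w2 : seq T) :
  \max_(i < 2) size (if val i == 0 then w1 else w2) = maxn (size w1) (size w2).
Proof. by rewrite big_ord_recl big_ord1. Qed.

Section Logic.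
Variable Sigma : finType.
Local Notation G := (Gam Sigma).

Definition j0 : 'I_2 := @Ordinal 2 0 isT.
Definition j1 : 'I_2 := @Ordinal 2 1 isT.
Definition i0 : 'I_3 := @Ordinal 3 0 isT.
Definition i1 : 'I_3 := @Ordinal 3 1 isT.
Definition i2 : 'I_3 := @Ordinal 3 2 isT.

Definition good (h : {ffun 'I_3 -> option G}) : bool :=
  match h i0 with
  | Some (inl f) => [&& (f j0 != None) || (f j1 != None),
                        h i1 == omap (@iotaG Sigma) (f j0) & h i2 == omap (@iotaG Sigma) (f j1)]
  | _ => false
  end.

Lemma good_inv h : good h -> exists f : F2 Sigma, h i0 = Some (inl f) /\
  ((f j0 != None) || (f j1 != None)) /\ h i1 = omap (@iotaG Sigma) (f j0) /\ h i2 = omap (@iotaG Sigma) (f j1).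
Proof.
rewrite /good; case: (h i0) => [[f|g]|] //= /and3P [H1 /eqP H2 /eqP H3].
by exists f.
Qed.

Lemma omap_iota_inj (a b : option Sigma) : omap (@iotaG Sigma) a = omap (@iotaG Sigma) b -> a = b.
Proof. by case: a; case: b => //= a b [->]. Qed.

Lemma good_conv_back (u : seq (F2 Sigma)) w1 w2 : u = conv2 w1 w2 ->
  all good (conv (W3 (map inl u : seq G) (map (@iotaG Sigma) w1) (map (@iotaG Sigma) w2))).
Proof.
move=> Eu; apply: conv_all_intro => k; rewrite max3 !size_map.
have Hs : size u = maxn (size w1) (size w2) by rewrite Eu /conv2 /conv size_map size_iota max2.
rewrite Hs maxnn => hk.
have Hu : onth u k = Some [ffun i : 'I_2 => onth (if val i == 0 then w1 else w2) k].
  by rewrite Eu /conv2 onth_conv max2 hk.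
rewrite /good !ffunE /= onth_map Hu /= !ffunE /= !onth_map !eqxx !andbT.
move: hk; rewrite leq_max => /orP [h|h]; have [a Ha] := onth_some h; by rewrite Ha ?orbT.
Qed.

Lemma good_conv_fwd (b : seq G) w1 w2 :
  all good (conv (W3 b (map (@iotaG Sigma) w1) (map (@iotaG Sigma) w2))) ->
  exists u, b = map inl u /\ u = conv2 w1 w2.
Proof.
move=> /conv_all_elim; rewrite max3 !size_map => H.
have Hf : forall k, k < maxn (size b) (maxn (size w1) (size w2)) -> exists f : F2 Sigma,
    onth b k = Some (inl f) /\ f = [ffun i : 'I_2 => onth (if val i == 0 then w1 else w2) k]
    /\ ((f j0 != None) || (f j1 != None)).
  move=> k hk; have [f [E0 [Ne [E1 E2]]]] := good_inv (H k hk).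
  move: E0 E1 E2; rewrite !ffunE /= !onth_map => E0 E1 E2.
  exists f; split => //; split => //.
  apply/ffunP => i; rewrite ffunE.
  case: i => [[|[|m]] hm] /=.
  - have -> : Ordinal hm = j0 by apply: val_inj.
    by apply: omap_iota_inj; rewrite E1.
  - have -> : Ordinal hm = j1 by apply: val_inj.
    by apply: omap_iota_inj; rewrite E2.
  - by [].
set u := map (fun g : G => if g is inl f then f else [ffun=> None]) b.
have Hb : b = map inl u.
  apply: eq_from_onth => k; rewrite /u -map_comp onth_map.
  case E: (onth b k) => [g|] //=.
  have hk : k < maxn (size b) (maxn (size w1) (size w2)) by rewrite leq_max (onth_size E).
  have [f [Ef _]] := Hf k hk.
  by move: E; rewrite Ef => -[<-].
exists u; split => //.
apply: eq_from_onth => k.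
rewrite /conv2 onth_conv max2.
case: ifP => hk.
  have hkN : k < maxn (size b) (maxn (size w1) (size w2)) by rewrite leq_max hk orbT.
  have [f [Ef [Ef2 _]]] := Hf k hkN.
  by rewrite /u onth_map Ef /= Ef2.
case E: (onth u k) => [f|] //.
have hkb : k < size b by have := onth_size E; rewrite /u size_map.
have hkN : k < maxn (size b) (maxn (size w1) (size w2)) by rewrite leq_max hkb.
have [f' [Ef' [Ef2 Ne]]] := Hf k hkN.
move: Ne; rewrite Ef2 !ffunE /= => /orP [h|h].
  case E1: (onth w1 k) h => [a|] // _.
  have h1 := onth_size E1.
  by rewrite leq_max h1 in hk.
case E2: (onth w2 k) h => [a|] // _.
have h1 := onth_size E2.
by rewrite leq_max h1 orbT in hk.
Qed.

Definition Lone (g0 : G) : nfa G := Nfa [:: (0, g0, 1)] [:: 0] [:: 1].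
Definition Lall : nfa G := Nfa [seq (0, g, 0) | g <- enum G] [:: 0] [:: 0].
Definition Rn : nfa {ffun 'I_3 -> option G} :=
  Nfa [seq (0, h, 0) | h <- enum {ffun 'I_3 -> option G} & good h] [:: 0] [:: 0].
Definition chis (j : 'I_3) : nat := nth 0 [:: 1; 3; 4] j.

Lemma Lone_acc g0 u : nfa_accepts (Lone g0) u -> u = [:: g0].
Proof.
case=> p [q [hp [hq R]]]; move: hp hq; rewrite /= !inE => /eqP Ep /eqP Eq; subst p q.
case: u R => [|a u] /=; first by [].
case=> r [hr R']; move: hr; rewrite inE => /eqP [Ea Er]; subst a r.
case: u R' => [|a u] //= [r [hr _]].
by move: hr; rewrite inE => /eqP [].
Qed.

Lemma Lone_acc' g0 : nfa_accepts (Lone g0) [:: g0].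
Proof. by exists 0, 1; split; [|split]; rewrite /= ?inE //; exists 1; rewrite inE. Qed.

Lemma Lall_acc u : nfa_accepts Lall u.
Proof.
exists 0, 0; split; first by rewrite inE.
split; first by rewrite inE.
elim: u => //= a u IH; exists 0; split => //.
by apply/mapP; exists a; rewrite ?mem_enum.
Qed.

Lemma Rn_good p u q : nfa_reach Rn p u q -> all good u.
Proof.
elim: u p => //= a u IH p [r [hr R]].
move: hr => /mapP [h]; rewrite mem_filter => /andP [gh _] [Ep Ea Er]; subst a r.
by rewrite gh (IH 0 R).
Qed.

Lemma Rn_acc u : all good u -> nfa_accepts Rn u.
Proof.
move=> H; exists 0, 0; split; first by rewrite inE.
split; first by rewrite inE.
elim: u H => //= a u IH /andP [ga gu]; exists 0; split; last exact: IH.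
by apply/mapP; exists a; rewrite // mem_filter ga mem_enum.
Qed.

Lemma W3eq (rho : nat -> seq (nat * G * nat)) :
  (fun j : 'I_3 => plabel (rho (chis j))) =1 W3 (plabel (rho 1)) (plabel (rho 3)) (plabel (rho 4)).
Proof. by move=> [m hm]; case: m hm => [|[|[|m]]] hm. Qed.

End Logic.

Lemma size_in (T : eqType) (f : T -> seq esym) l y :
  y \in l -> size (f y) <= size (flatten (map f l)).
Proof.
elim: l => //= z l IH; rewrite inE size_cat => /orP [/eqP ->|/IH h].
  exact: leq_addr.
exact: leq_trans h (leq_addl _ _).
Qed.

Section Graph.
Variable Sigma : finType.
Local Notation G := (Gam Sigma).
Variable A : nfa (F2 Sigma).
Local Notation g := (mkg A).
Local Notation x := (enc_nfa A).

Lemma trans_bound t : t \in ntrans A -> t.1.1 < size x /\ t.2 < size x.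
Proof.
move=> /(size_in (@etrans _)); case: t => [[p a] q] /=.
rewrite /enc_nfa /elist ?size_cat /etrans ?size_cat /esymb /enat ?size_cat ?size_nseq /= => h.
lia.
Qed.

Lemma init_bound p : p \in ninit A -> p < size x.
Proof.
move=> /(size_in enat).
rewrite /enc_nfa /elist ?size_cat /enat ?size_cat ?size_nseq /= => h.
lia.
Qed.

Lemma fin_bound p : p \in nfin A -> p < size x.
Proof.
move=> /(size_in enat).
rewrite /enc_nfa /elist ?size_cat /enat ?size_cat ?size_nseq /= => h.
lia.
Qed.

Lemma edge_cases e : e \in gedges g ->
  (exists t, t \in ntrans A /\ e = (t.1.1.+2, inl t.1.2 : G, t.2.+2)) \/
  (exists p, p \in ninit A /\ e = (0, startL Sigma, p.+2)) \/
  (exists q, q \in nfin A /\ e = (q.+2, endL Sigma, 1)) \/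
  (exists a : Sigma, e = (0, iotaG a, 0)).
Proof.
rewrite /= !mem_cat => /orP [/mapP [t ht ->]|/orP [/mapP [p hp ->]|/orP [/mapP [q hq ->]|/mapP [a _ ->]]]].
- by left; exists t.
- by right; left; exists p.
- by right; right; left; exists q.
- by right; right; right; exists a.
Qed.

Lemma g_wf : graph_wf g.
Proof.
move=> e /edge_cases [[t [ht ->]]|[[p [hp ->]]|[[q [hq ->]]|[a ->]]]] /=.
- by have [h1 h2] := trans_bound ht; split; [exact: h1|exact: h2].
- by have h := init_bound hp; split; [|exact: h].
- by have h := fin_bound hq; split; [exact: h|].
- by split.
Qed.

Lemma path_fwd p u q : nfa_reach A p u q ->
  exists rho, is_path g p.+2 rho q.+2 /\ plabel rho = map inl u.
Proof.
elim: u p => [|a u IH] p /=.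
  by move=> ->; exists [::].
move=> [r [hr R]]; have [rho [P L]] := IH r R.
exists ((p.+2, inl a : G, r.+2) :: rho); split; last by rewrite /= L.
split; last by split.
rewrite /= mem_cat; apply/orP; left; apply/mapP; by exists (p, a, r).
Qed.

Lemma path_bwd rho p q u : is_path g p.+2 rho q.+2 -> plabel rho = map inl u -> nfa_reach A p u q.
Proof.
elim: rho p u => [|e rho IH] p u /=.
  by case: u => // [[->]].
move=> [he [E1 Hp]]; case: u => [|f u] //= [El Er].
have := edge_cases he.
case=> [[t [ht Ee]]|[[p' [_ Ee]]|[[q' [_ Ee]]|[a Ee]]]]; rewrite Ee /= in El E1 Hp; try discriminate.
case: El => Ef; case: E1 => Ep.
exists t.2; split; last exact: IH Hp Er.
by move: ht; case: t Ef Ep {Ee Hp} => [[t1 t2] t3] /= -> ->.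
Qed.

Definition loops (w : seq Sigma) : seq (nat * G * nat) := [seq (0, iotaG a, 0) | a <- w].

Lemma loops_path w : is_path g 0 (loops w) 0.
Proof.
elim: w => //= a w IH; split; last by split.
rewrite /= !mem_cat; apply/orP; right; apply/orP; right; apply/orP; right.
by apply/mapP; exists a; rewrite ?mem_enum.
Qed.

Lemma plabel_loops w : plabel (loops w) = map (@iotaG Sigma) w.
Proof. by rewrite /plabel /loops -map_comp. Qed.

Lemma single_edge g0 u v r : is_path g u r v -> plabel r = [:: g0] -> (u, g0, v) \in gedges g.
Proof.
case: r => [|e [|e' r]] //= [he [Eu Ev]] [Ee].
by move: he; case: e Eu Ev Ee => [[e1 e2] e3] /= -> -> ->.
Qed.

End Graph.

Definition phi (Sigma : finType) : ecrpq (Gam Sigma) :=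
  Ecrpq [:: (0, Lone (startL Sigma), 2); (2, @Lall Sigma, 3); (3, Lone (endL Sigma), 1);
            (0, @Lall Sigma, 0); (0, @Lall Sigma, 0)]
        [:: existT (fun n => (nfa {ffun 'I_n -> option (Gam Sigma)} * ('I_n -> nat))%type) 3 (@Rn Sigma, chis)]
        [:: (3, 4)].

Lemma phi_wf Sigma : ecrpq_wf (phi Sigma).
Proof.
split.
  by case=> // _ [[|[|[|m]]] hm].
by move=> ij; rewrite inE => /eqP ->.
Qed.

Theorem mainTheorem4 :
  forall (Sigma : finType) (S : seq Sigma -> seq Sigma -> Prop),
  exists (Gam : finType) (iota : Sigma -> Gam) (phi : ecrpq Gam),
    injective iota /\ ecrpq_wf phi /\
    exists (M : TM) (c : nat),
      forall A : nfa {ffun 'I_2 -> option Sigma},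
        reg2_nfa A ->
        exists (g : graph Gam) (v v' : nat),
          graph_wf g /\ v < gn g /\ v' < gn g /\
          computes_in_space M (enc_nfa A) (enc_graph_nodes g v v')
            (c * trunc_log 2 (size (enc_nfa A)) + c) /\
          (ecrpq_sat (lift_rel iota S) g phi v v' <->
             exists w1 w2, rel_of2 A w1 w2 /\ S w1 w2).
Proof.
move=> Sigma S.
exists (Gam Sigma), (@iotaG Sigma), (phi Sigma).
split; first by move=> a b [].
split; first exact: phi_wf.
exists (TMx Sigma), 1.
move=> A regA.
exists (mkg A), 0, 1.
split; first exact: g_wf.
split; first by [].
split; first by [].
split.
  have [k [w E]] := full_run A.
  exists k; split.
    rewrite E; apply: step_halt; last by [].
    rewrite /KK; lia.
  split; first by rewrite E.
  by move=> kk _; rewrite full_space.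
split.
- move=> [nu [N0 [N1 [Nb [rho [HP [HR HS]]]]]]].
  have [P0 A0] := HP 0 isT.
  have [P1 _] := HP 1 isT.
  have [P2 A2] := HP 2 isT.
  move: P0 P1 P2 A0 A2 => /= P0 P1 P2 A0 A2.
  rewrite N0 in P0; rewrite N1 in P2.
  have E0 := single_edge P0 (Lone_acc A0).
  have E2 := single_edge P2 (Lone_acc A2).
  have [p [hp Ep]] : exists p, p \in ninit A /\ nu 2 = p.+2.
    case: (edge_cases E0) => [[t [_ E]]|[[p [hp E]]|[[q [_ E]]|[a E]]]]; try discriminate E.
    exists p; split => //.
    by have /= -> := f_equal (fun e : nat * Gam Sigma * nat => e.2) E.
  have [q [hq Eq]] : exists q, q \in nfin A /\ nu 3 = q.+2.
    case: (edge_cases E2) => [[t [_ E]]|[[p' [_ E]]|[[q [hq E]]|[a E]]]]; try discriminate E.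
    exists q; split => //.
    by have /= -> := f_equal (fun e : nat * Gam Sigma * nat => e.1.1) E.
  have := HS (3, 4); rewrite inE eqxx => /(_ isT) [w1 [w2 [L3 [L4 HSw]]]].
  have := HR 0 isT; rewrite /= (conv_ext (W3eq rho)) L3 L4.
  case=> p0 [q0 [_ [_ R0]]].
  have [u [Lu Eu]] := good_conv_fwd (Rn_good R0).
  rewrite Ep Eq in P1.
  have Ru := path_bwd P1 Lu.
  exists w1, w2; split => //.
  by exists p, q; split => //; split => //; rewrite -Eu.
- move=> [w1 [w2 [[p [q [hp [hq R]]]] HS]]].
  have [r1 [P1 L1]] := path_fwd R.
  exists (fun y => nth 0 [:: 0; 1; p.+2; q.+2] y).
  split => //; split => //; split.
    move=> y; case: y => [|[|[|[|y]]]] /=; first [done | exact: (init_bound hp) | exact: (fin_bound hq) | by rewrite nth_nil].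

  pose rho := fun i => nth [::] [:: [:: (0, startL Sigma, p.+2)]; r1; [:: (q.+2, endL Sigma, 1)];
                                 loops w1; loops w2] i.
  exists rho; split.
    case=> [|[|[|[|[|i]]]]] //= _.
    + split; last exact: Lone_acc'.
      split; last by split.
      rewrite /= !mem_cat; apply/orP; right; apply/orP; left; apply/mapP; by exists p.
    + split; [exact: P1 | exact: Lall_acc].
    + split; last exact: Lone_acc'.
      split; last by split.
      rewrite /= !mem_cat; apply/orP; right; apply/orP; right; apply/orP; left; apply/mapP; by exists q.
    + split; [exact: loops_path | exact: Lall_acc].
    + split; [exact: loops_path | exact: Lall_acc].
  split.
    case=> // _ /=.
    rewrite (conv_ext (W3eq rho)) /rho /= L1 !plabel_loops.
    apply: Rn_acc; exact: (good_conv_back (erefl _)).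
  move=> ij; rewrite inE => /eqP -> /=.
  by exists w1, w2; rewrite /rho /= !plabel_loops.
Qed.
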